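(* Fix an integer $\alpha\ge 1$. Then $$\lim_{n\to\infty}\frac{\lambda_{n,\alpha}}{n}=\frac{1}{\alpha}.$$
   Context: All graphs are finite and simple. For a graph $G$, $\lambda(G)$ denotes the spectral radius (largest eigenvalue) of its adjacency matrix, and $\alpha(G)$ denotes its independence number. For integers $n\ge \alpha\ge 1$, $\mathcal{G}_{n,\alpha}$ is the set of all connected graphs of order $n$ with independence number $\alpha$, and $\lambda_{n,\alpha}=\min\{\lambda(G): G\in\mathcal{G}_{n,\alpha}\}$. *)

(* Defs.v *)
(* Scalars: algC (archimedean, so the epsilon-N limit
   below is the usual real limit). *)
From HB Require Import structures.
From mathcomp Require Import all_boot all_order all_algebra all_field.
From Stdlib Require Import ClassicalEpsilon.
Set Implicit Arguments. Unset Strict Implicit. Unset Printing Implicit Defensive.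
Import Order.TTheory GRing.Theory Num.Theory.
Local Open Scope ring_scope.

Definition graph (n : nat) := {ffun 'I_n * 'I_n -> bool}.

Definition adj n (g : graph n) : rel 'I_n := fun x y => g (x, y).

Definition simple_graph n (g : graph n) : bool :=
  [forall x, ~~ adj g x x] && [forall x, forall y, adj g x y == adj g y x].

Definition connected_graph n (g : graph n) : bool :=
  [forall x, forall y, connect (adj g) x y].

Definition independent n (g : graph n) (S : {set 'I_n}) : bool :=
  [forall x in S, forall y in S, ~~ adj g x y].

Definition indep_num n (g : graph n) : nat :=
  \max_(S : {set 'I_n} | independent g S) #|S|.

Definition adj_mx n (g : graph n) : 'M[algC]_n :=
  \matrix_(i, j) ((adj g i j : nat)%:R).

Definition largest_eigenvalue n (A : 'M[algC]_n) : algC :=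
  epsilon (inhabits 0)
    (fun r => eigenvalue A r /\ forall a, eigenvalue A a -> a <= r).

Definition spec_rad n (g : graph n) : algC := largest_eigenvalue (adj_mx g).

Definition G_class (n a : nat) (g : graph n) : bool :=
  [&& simple_graph g, connected_graph g & indep_num g == a].

Definition lambda_min (n a : nat) : algC :=
  epsilon (inhabits 0)
    (fun r => (exists2 g : graph n, G_class a g & spec_rad g = r) /\
              forall g : graph n, G_class a g -> r <= spec_rad g).

Definition converges (u : nat -> algC) (l : algC) : Prop :=
  forall eps : algC, 0 < eps ->
    exists N : nat, forall n : nat, (N <= n)%N -> `|u n - l| < eps.

(* Main.v *)
Require Import Defs.
From HB Require Import structures.
From mathcomp Require Import all_boot all_order all_algebra all_field.
From mathcomp Require Import spectral sesquilinear zify ring.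
From Stdlib Require Import ClassicalEpsilon.
Import Order.TTheory GRing.Theory Num.Theory.
Set Implicit Arguments. Unset Strict Implicit. Unset Printing Implicit Defensive.
Local Open Scope ring_scope.

Lemma fin_max (I : finType) (f : I -> algC) (i0 : I) :
  (forall i, f i \is Num.real) -> exists i, forall j, f j <= f i.
Proof.
move=> fR.
have H : forall s : seq I, exists2 x, x \in i0 :: s & forall y, y \in i0 :: s -> f y <= f x.
  elim=> [|a s [x xs IH]].
    by exists i0 => [|y]; rewrite ?inE // => /eqP ->.
  have [le|le] := orP (real_leVge (fR x) (fR a)).
    exists a; first by rewrite !inE eqxx orbT.
    move=> y; rewrite !inE => /or3P[/eqP->|/eqP->|ys]; last 1 first.
    - by apply: le_trans le; apply: IH; rewrite inE ys orbT.
    - by apply: le_trans le; apply: IH; rewrite inE eqxx.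
    - by [].
  exists x; first by move: xs; rewrite !inE => /orP[->|->]; rewrite ?orbT.
  move=> y; rewrite !inE => /or3P[/eqP->|/eqP->|ys].
  - by apply: IH; rewrite inE eqxx.
  - by [].
  - by apply: IH; rewrite inE ys orbT.
have [x _ Hx] := H (enum I).
by exists x => j; apply: Hx; rewrite inE mem_enum orbT.
Qed.

Section Spec.
Variable n : nat.
Variable A : 'M[algC]_n.
Hypothesis Asym : A^T = A.
Hypothesis Areal : forall i j, A i j \is Num.real.

Let P := spectralmx A.
Let d := spectral_diag A.

Lemma A_realmx : A \is a mxOver Num.real.
Proof. by apply/mxOverP => i j; apply: Areal. Qed.

Lemma A_symmx : A \is symmetricmx.
Proof. apply/is_hermitianmxP; rewrite expr0 scale1r map_mx_id //. Qed.

Lemma Pu : P \is unitarymx.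
Proof. exact: spectral_unitarymx. Qed.

Lemma AE : A = (P ^t* )%sesqui *m diag_mx d *m P.
Proof.
rewrite -invmx_unitary; last exact: Pu.
apply/orthomx_spectralP; apply: symmetric_normalmx; [exact: A_symmx|exact: A_realmx].
Qed.

Lemma PPt : P *m (P ^t* )%sesqui = 1%:M.
Proof. exact/unitarymxP/Pu. Qed.

Lemma PtP : (P ^t* )%sesqui *m P = 1%:M.
Proof. exact/mulmx1C/PPt. Qed.

Lemma d_real i : d 0 i \is Num.real.
Proof.
have := hermitian_spectral_diag_real (realsym_hermsym A_symmx A_realmx).
by move/mxOverP; apply.
Qed.

Lemma d_eig i : eigenvalue A (d 0 i).
Proof.
apply/eigenvalueP; exists (delta_mx 0 i *m P).
  rewrite AE !mulmxA -(mulmxA _ P) PPt mulmx1.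
  by rewrite -[delta_mx 0 i *m diag_mx d]rowE row_diag_mx scalemxAl.
apply/negP => /eqP/(congr1 (mulmx^~ (P ^t* )%sesqui)).
rewrite mul0mx -mulmxA PPt mulmx1 => /matrixP /(_ 0 i); rewrite !mxE !eqxx /=.
by move/eqP; rewrite oner_eq0.
Qed.

Lemma eig_d a : eigenvalue A a -> exists i, a = d 0 i.
Proof.
move/eigenvalueP => [v Hv vn0].
set w := v *m (P ^t* )%sesqui.
have Hw : w *m diag_mx d = a *: w.
  have := congr1 (mulmx^~ (P ^t* )%sesqui) Hv.
  rewrite AE !mulmxA -(mulmxA _ P) PPt mulmx1 -scalemxAl => H; exact H.
have wn0 : w != 0.
  apply: contra vn0 => /eqP w0; apply/eqP.
  by rewrite -[v]mulmx1 -PtP mulmxA -/w w0 mul0mx.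
have : [exists i, w 0 i != 0].
  apply: contraR wn0; rewrite negb_exists => /forallP H.
  by apply/eqP/rowP => j; move: (H j); rewrite negbK => /eqP ->; rewrite mxE.
move=> /existsP [i wi].
exists i; have := congr1 (fun M : 'rV_n => M 0 i) Hw.
rewrite mul_mx_diag mxE [X in _ = X]mxE => /eqP.
rewrite [a * _]mulrC -subr_eq0 -mulrBr mulf_eq0 (negbTE wi) /= subr_eq0 => /eqP.
by [].
Qed.

Lemma largest_exists (i0 : 'I_n) :
  exists r, eigenvalue A r /\ forall a, eigenvalue A a -> a <= r.
Proof.
have [i Hi] := @fin_max _ (fun i => d 0 i) i0 d_real.
exists (d 0 i); split; first exact: d_eig.
by move=> a /eig_d [j ->]; exact: Hi.
Qed.

Lemma rayleigh (r : algC) (u : 'rV[algC]_n) : (forall i, d 0 i <= r) ->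
  (u *m A *m (u ^t* )%sesqui) 0 0 <= r * (u *m (u ^t* )%sesqui) 0 0.
Proof.
move=> Hr.
set w := u *m (P ^t* )%sesqui.
have wt : (w ^t* )%sesqui = P *m (u ^t* )%sesqui.
  by rewrite /w trmx_mul map_mxM trmxCK.
have E1 : u *m A *m (u ^t* )%sesqui = w *m diag_mx d *m (w ^t* )%sesqui.
  by rewrite wt AE /w !mulmxA.
have E2 : u *m (u ^t* )%sesqui = w *m (w ^t* )%sesqui.
  by rewrite wt /w mulmxA -(mulmxA u) PtP mulmx1.
rewrite E1 E2 !mxE mulr_sumr; apply: ler_sum => i _.
rewrite mul_mx_diag !mxE mulrAC -normCK [r * _]mulrC.
by apply: ler_wpM2l => //; rewrite exprn_ge0.
Qed.

End Spec.

Local Close Scope ring_scope.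
Lemma amgm (a c : nat) : 2 * a * c <= a * a + c * c.
Proof.
wlog h : a c / a <= c.
  move=> H; case: (leqP a c) => h; first exact: H.
  have := H c a (ltnW h); lia.
have -> : c = a + (c - a) by lia.
move: (c - a) => e; nia.
Qed.

Lemma arith (a b s k T : nat) : a * a <= s * k -> s + b * b <= T -> (a + b) * (a + b) <= T * k.+1.
Proof.
move=> h1 h2.
have h3 : 2 * a * b <= s + b * b * k.
  case: k h1 => [|k] h1.
    have -> : a = 0 by nia.
    lia.
  have : (2 * a * b) * k.+1 <= (s + b * b * k.+1) * k.+1.
    have h4 := amgm a (b * k.+1).
    nia.
  by rewrite leq_pmul2r.
nia.
Qed.

Section Greedy.
Variable n : nat.
Variable g : graph n.
Hypothesis irr : forall x, ~~ adj g x x.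
Hypothesis sym : forall x y, adj g x y = adj g y x.

Definition degin (X : {set 'I_n}) x := #|[set y in X | adj g x y]|.

Lemma degin_mono (X Y : {set 'I_n}) x : Y \subset X -> degin Y x <= degin X x.
Proof.
move=> sYX; apply: subset_leq_card; apply/subsetP => y.
by rewrite !inE => /andP[/(subsetP sYX) -> ->].
Qed.

Lemma greedy (X : {set 'I_n}) : exists S : {set 'I_n},
  [/\ S \subset X, independent g S &
      #|X| * #|X| <= (\sum_(x in X) degin X x + #|X|) * #|S|].
Proof.
have [k Hk] := ubnP #|X|; elim: k X Hk => [//|k IH] X Hk.
have [X0|[v vX]] := set_0Vmem X.
  exists set0; split; rewrite ?sub0set ?X0 ?cards0 //.
  by apply/forallP => x; rewrite inE.
case: (arg_minnP (degin X) vX) => {v vX} v vX vmin.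
set d := degin X v.
set Nb := [set y in X | adj g v y].
set N := v |: Nb.
set Y := X :\: N.
have NX : N \subset X.
  by apply/subsetP => y; rewrite !inE => /orP[/eqP->|/andP[]].
have cN : #|N| = d.+1 by rewrite cardsU1 !inE (negbTE (irr v)) andbF.
have cX : #|X| = #|Y| + d.+1.
  rewrite cardsD (setIidPr NX) cN.
  by have := subset_leq_card NX; rewrite cN => h; rewrite subnK.
have YX : Y \subset X by apply: subsetDl.
have [S' [S'Y indS' HS']] : exists S : {set 'I_n}, [/\ S \subset Y, independent g S & #|Y| * #|Y| <= (\sum_(x in Y) degin Y x + #|Y|) * #|S|].
  by apply: IH; rewrite cX in Hk; lia.
have vS' : v \notin S'.
  by apply: contraT => /negPn /(subsetP S'Y); rewrite !inE eqxx.
exists (v |: S'); split.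
- by rewrite subUset sub1set (subset_trans S'Y YX) andbT.
- have nadj : forall y, y \in Y -> ~~ adj g v y.
    move=> y; rewrite !inE negb_or => /andP[/andP[_ H] yX].
    by apply: contra H => ->; rewrite yX.
  apply/forallP => x; apply/implyP => xS; apply/forallP => y; apply/implyP => yS.
  move: xS yS => /setU1P[->|xS'] /setU1P[->|yS'].
  + exact: irr.
  + exact: nadj (subsetP S'Y _ yS').
  + by rewrite sym; exact: nadj (subsetP S'Y _ xS').
  + by move/forallP/(_ x)/implyP/(_ xS')/forallP/(_ y)/implyP/(_ yS'): indS'.
- rewrite cardsU1 vS' add1n.
  rewrite cX.
  apply: arith; first exact: HS'.
  rewrite [\sum_(x in X) _](big_setID N) /= (setIidPr NX) -/Y.
  have h1 : \sum_(x in Y) degin Y x <= \sum_(x in Y) degin X x.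
    by apply: leq_sum => x _; apply: degin_mono.
  have h2 : d.+1 * d <= \sum_(x in N) degin X x.
    rewrite -cN -sum_nat_const; apply: leq_sum => x xN.
    exact: vmin (subsetP NX _ xN).
  move: h1 h2; set a1 := (\sum_(x in Y) degin Y x); set a2 := (\sum_(x in Y) degin X x); set a3 := (\sum_(x in N) degin X x). lia.
Qed.

End Greedy.

Local Open Scope ring_scope.

Lemma sum_bool_card (I : finType) (b : pred I) :
  (\sum_(i : I) (b i : nat))%N = #|[set i | b i]|.
Proof.
rewrite -sum1_card [RHS]big_mkcond /=; apply: eq_bigr => i _; rewrite inE.
by case: (b i).
Qed.

Section GraphSpec.
Variable n : nat.
Variable g : graph n.
Hypothesis Hs : simple_graph g.

Lemma irr_g x : ~~ adj g x x.
Proof. by case/andP: Hs => /forallP. Qed.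

Lemma sym_g x y : adj g x y = adj g y x.
Proof. by case/andP: Hs => _ /forallP /(_ x) /forallP /(_ y) /eqP. Qed.

Definition deg x := degin g setT x.

Lemma deg_sum x : \sum_j adj_mx g j x = (deg x)%:R.
Proof.
rewrite /deg /degin.
have -> : [set y in setT | adj g x y] = [set y | adj g x y].
  by apply/setP => y; rewrite !inE.
rewrite -sum_bool_card natr_sum; apply: eq_bigr => j _.
by rewrite mxE sym_g.
Qed.

Lemma adj_sym : (adj_mx g)^T = adj_mx g.
Proof. by apply/matrixP => i j; rewrite !mxE sym_g. Qed.

Lemma adj_real i j : adj_mx g i j \is Num.real.
Proof. by rewrite mxE realn. Qed.

Lemma adj_ge0 i j : 0 <= adj_mx g i j.
Proof. by rewrite mxE ler0n. Qed.

Lemma spec_rad_spec (i0 : 'I_n) :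
  eigenvalue (adj_mx g) (spec_rad g) /\
  forall a, eigenvalue (adj_mx g) a -> a <= spec_rad g.
Proof.
rewrite /spec_rad /largest_eigenvalue.
apply: (epsilon_spec (inhabits 0) (fun r => eigenvalue (adj_mx g) r /\ _)).
exact: largest_exists adj_sym adj_real i0.
Qed.

Lemma spec_rad_real (i0 : 'I_n) : spec_rad g \is Num.real.
Proof.
have [/(eig_d adj_sym adj_real) [i ->] _] := spec_rad_spec i0.
exact: d_real adj_sym adj_real i.
Qed.

Lemma eig_bound a (D : nat) (i0 : 'I_n) : eigenvalue (adj_mx g) a ->
  (forall x, (deg x <= D)%N) -> `|a| <= D%:R.
Proof.
move=> /eigenvalueP [v Hv vn0] HD.
have [j Hj] := @fin_max _ (fun j => `|v 0 j|) i0 (fun j => normr_real _).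
have vj0 : 0 < `|v 0 j|.
  rewrite lt_def normr_ge0 andbT; apply: contra vn0 => /eqP h.
  apply/eqP/rowP => i; rewrite mxE; apply/eqP; rewrite -normr_eq0 eq_le normr_ge0 andbT.
  by rewrite -h; exact: Hj.
have E := congr1 (fun M : 'rV_n => M 0 j) Hv; rewrite /= !mxE in E.
have : `|a| * `|v 0 j| <= `|v 0 j| * D%:R.
  rewrite -normrM -E.
  apply: le_trans (ler_norm_sum _ _ _) _.
  apply: (@le_trans _ _ (\sum_i `|v 0 j| * adj_mx g i j)).
    apply: ler_sum => i _; rewrite normrM (ger0_norm (adj_ge0 _ _)).
    by apply: ler_wpM2r; [exact: adj_ge0 | exact: Hj].
  rewrite -mulr_sumr deg_sum; apply: ler_wpM2l; first exact: normr_ge0.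
  by rewrite ler_nat.
by rewrite mulrC ler_pM2l.
Qed.

Lemma spec_ub (D : nat) (i0 : 'I_n) : (forall x, (deg x <= D)%N) ->
  spec_rad g <= D%:R.
Proof.
move=> HD; have [e _] := spec_rad_spec i0.
apply: le_trans (eig_bound i0 e HD).
exact: real_ler_norm (spec_rad_real i0).
Qed.

Lemma spec_lb (i0 : 'I_n) :
  (\sum_x deg x)%:R <= spec_rad g * n%:R.
Proof.
have [_ Hmax] := spec_rad_spec i0.
have := @rayleigh n (adj_mx g) adj_sym adj_real (spec_rad g) (const_mx 1)
  (fun i => Hmax _ (d_eig adj_sym adj_real i)).
have -> : ((const_mx 1 : 'rV[algC]_n) ^t* )%sesqui = const_mx 1.
  by apply/matrixP => i j; rewrite !mxE conjC1.
rewrite !mxE.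
have -> : \sum_j (const_mx 1 : 'rV[algC]_n) 0 j * (const_mx 1 : 'cV[algC]_n) j 0 = n%:R.
  rewrite (eq_bigr (fun _ => 1)); last by move=> j _; rewrite !mxE mulr1.
  by rewrite sumr_const card_ord.
move=> H; apply: le_trans H; rewrite le_eqVlt; apply/orP; left; apply/eqP.
rewrite natr_sum; apply/eq_bigr => j _.
rewrite [X in _ = _ * X]mxE mulr1 mxE -deg_sum; apply: eq_bigr => i _.
by rewrite [const_mx 1 0 i]mxE mul1r.
Qed.

End GraphSpec.

Local Close Scope ring_scope.

Lemma card_val_le1 n k : #|[set y : 'I_n | val y == k]| <= 1.
Proof.
case: (pickP [pred y : 'I_n | val y == k]) => [y /= /eqP Hy|none].
  suff -> : [set y0 : 'I_n | val y0 == k] = [set y] by rewrite cards1.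
  apply/setP => z; rewrite !inE -Hy; apply/eqP/eqP => [/val_inj|->] //.
suff -> : [set y0 : 'I_n | val y0 == k] = set0 by rewrite cards0.
by apply/setP => z; rewrite !inE; apply: none.
Qed.

Lemma card_class n a r : 0 < a -> #|[set y : 'I_n | y %% a == r]| <= n %/ a + 1.
Proof.
move=> a0.
have f_lt : forall y : 'I_n, y %/ a < (n %/ a).+1.
  by move=> y; rewrite ltnS leq_div2r // ltnW.
pose f (y : 'I_n) : 'I_(n %/ a).+1 := Ordinal (f_lt y).
rewrite -(card_in_imset (f := f)).
  by apply: leq_trans (max_card _) _; rewrite card_ord addn1.
move=> y z; rewrite !inE => /eqP yr /eqP zr [] /= h.
by apply/val_inj; rewrite /= (divn_eq y a) (divn_eq z a) h yr zr.
Qed.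

Section Construction.
Variables (a n : nat).
Hypothesis a0 : 0 < a.
Hypothesis hn : a.*2 <= n.

Definition adjH (x y : 'I_n) : bool :=
  (x != y) && ((x %% a == y %% a) || [&& x < a, y < a & (x.+1 == y) || (y.+1 == x)]).

Definition H : graph n := [ffun p => adjH p.1 p.2].

Lemma adjHE x y : adj H x y = adjH x y.
Proof. by rewrite /adj ffunE. Qed.

Lemma adjH_sym x y : adjH x y = adjH y x.
Proof.
rewrite /adjH [y == x]eq_sym [y %% a == _]eq_sym [(y.+1 == x) || _]orbC.
by case: (x < a); case: (y < a).
Qed.

Lemma H_simple : simple_graph H.
Proof.
apply/andP; split; apply/forallP => x; first by rewrite adjHE /adjH eqxx.
by apply/forallP => y; rewrite !adjHE adjH_sym.
Qed.

Lemma ltn_an : a < n.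
Proof. by move: hn a0; rewrite -addnn; lia. Qed.

Lemma H_connected : connected_graph H.
Proof.
have symH : connect_sym (adj H).
  by apply: sym_connect_sym => x y; rewrite !adjHE adjH_sym.
pose o0 : 'I_n := Ordinal (leq_ltn_trans (leq0n _) ltn_an).
have path0 : forall r, r < a -> forall y : 'I_n, val y = r -> connect (adj H) o0 y.
  elim=> [|r IH] ra y yr.
    by have -> : y = o0 by apply: val_inj. 
  have rn : r < n by apply: ltn_trans ltn_an; apply: ltnW.
  apply: connect_trans (IH (ltnW ra) (Ordinal rn) erefl) _.
  apply: connect1; rewrite adjHE /adjH /= yr.
  rewrite (ltnW ra) ra eqxx /= orbT andbT -(inj_eq val_inj) /= yr.
  by rewrite neq_ltn ltnSn.
have tomod : forall x : 'I_n, exists2 y : 'I_n, val y < a & connect (adj H) x y.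
  move=> x.
  have xn : x %% a < n by apply: ltn_trans ltn_an; apply: ltn_pmod.
  exists (Ordinal xn); first by apply: ltn_pmod.
  case: (eqVneq x (Ordinal xn)) => [<-|ne]; first exact: connect0.
  apply: connect1; rewrite adjHE /adjH ne /= modn_mod eqxx //.
apply/forallP => x; apply/forallP => y.
have [x' x'a cx] := tomod x; have [y' y'a cy] := tomod y.
apply: connect_trans cx _; rewrite symH in cy.
apply: connect_trans _ cy.
apply: (@connect_trans _ _ o0).
  by rewrite symH; exact: path0 x'a x' erefl.
exact: path0 y'a y' erefl.
Qed.

Lemma H_indep : indep_num H = a.
Proof.
apply/eqP; rewrite eqn_leq; apply/andP; split.
  apply/bigmax_leqP => S indS.
  pose f (x : 'I_n) : 'I_a := Ordinal (ltn_pmod x a0).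
  rewrite -(card_in_imset (f := f)).
    by apply: leq_trans (max_card _) _; rewrite card_ord.
  move=> x y xS yS [] /= hxy; apply/eqP; apply: contraT => ne.
  move/forallP/(_ x)/implyP/(_ xS)/forallP/(_ y)/implyP/(_ yS): indS.
  by rewrite adjHE /adjH ne hxy eqxx.
have hlt : forall i : 'I_a, i + a < n.
  by move=> i; have := ltn_ord i; move: hn; rewrite -addnn; lia.
pose h (i : 'I_a) : 'I_n := Ordinal (hlt i).
have hinj : injective h.
  by move=> i j [] /eqP; rewrite eqn_add2r => /eqP /val_inj.
have indS : independent H [set h i | i in setT].
  apply/forallP => x; apply/implyP => /imsetP[i _ ->].
  apply/forallP => y; apply/implyP => /imsetP[j _ ->].
  rewrite adjHE /adjH /= !modnDr !modn_small // ltnNge leq_addl /= orbF.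
  apply/negP => /andP[ne /eqP e]; move: ne.
  by rewrite -(inj_eq val_inj) /= e eqxx.
apply: leq_trans (leq_bigmax_cond _ indS).
by rewrite card_imset // cardsT card_ord.
Qed.

Lemma H_deg x : deg H x <= n %/ a + 2.
Proof.
rewrite /deg /degin.
set C := [set y : 'I_n | y %% a == x %% a].
have sub : [set y in setT | adj H x y] \subset
    (C :\ x) :|: ([set y : 'I_n | val y == x.+1] :|: [set y : 'I_n | val y == x.-1]).
  apply/subsetP => y; rewrite !inE /= adjHE /adjH => /andP[ne /orP[e|/and3P[_ _ /orP[e|e]]]].
  - by rewrite eq_sym ne eq_sym e.
  - by apply/orP; right; apply/orP; left; rewrite eq_sym.
  - by rewrite -(eqP e) /= eqxx !orbT.
apply: leq_trans (subset_leq_card sub) _.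
apply: leq_trans (leq_card_setU _ _) _.
have h1 : #|C :\ x| <= n %/ a.
  have := card_class n (x %% a) a0; rewrite -/C (cardsD1 x C) !inE eqxx /=.
  by rewrite add1n addn1 ltnS.
have [h2 _] := leq_card_setU [set y : 'I_n | val y == x.+1] [set y : 'I_n | val y == x.-1].
have h3 := card_val_le1 n x.+1; have h4 := card_val_le1 n x.-1.
lia.
Qed.

End Construction.

Local Open Scope ring_scope.

Lemma class_simple n a (g : graph n) : G_class a g -> simple_graph g.
Proof. by case/and3P. Qed.

Lemma H_class a n (a0 : (0 < a)%N) (hn : (a.*2 <= n)%N) : G_class a (H a n).
Proof.
by rewrite /G_class (@H_simple a n) (H_connected a0 hn) (H_indep a0 hn) eqxx.
Qed.

Lemma lower n a (g : graph n) (i0 : 'I_n) : (0 < a)%N -> G_class a g ->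
  n%:R / a%:R - 1 <= spec_rad g.
Proof.
move=> a0 /and3P[Hs _ /eqP Ha].
have [S [_ indS HS]] := greedy (@irr_g n g Hs) (@sym_g n g Hs) setT.
have Sa : (#|S| <= a)%N by rewrite -Ha; exact: leq_bigmax_cond.
rewrite cardsT card_ord in HS.
have E : (\sum_(x in [set: 'I_n]) degin g setT x = \sum_x deg g x)%N.
  by apply: eq_bigl => x; rewrite in_setT.
rewrite E in HS.
set D := (\sum_x deg g x)%N.
have Hn : (n * n <= (D + n) * a)%N.
  by apply: (leq_trans HS); rewrite leq_mul2l Sa orbT.
have HnR : n%:R * n%:R <= (D%:R + n%:R) * a%:R :> algC.
  by rewrite -natrM -natrD -natrM ler_nat.
have hlb := spec_lb Hs i0; rewrite -/D in hlb.
have n0 : (0 < n)%N by case: (n) i0 => [[]|].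
have a0R : 0 < a%:R :> algC by rewrite ltr0n.
have n0R : 0 < n%:R :> algC by rewrite ltr0n.
rewrite -(ler_pM2r n0R); apply: le_trans hlb.
rewrite mulrBl mul1r lerBlDr mulrAC ler_pdivrMr //.
Qed.

Lemma lambda_min_spec n a (i0 : 'I_n) (g0 : graph n) : G_class a g0 ->
  (exists2 g : graph n, G_class a g & spec_rad g = lambda_min n a) /\
  forall g : graph n, G_class a g -> lambda_min n a <= spec_rad g.
Proof.
move=> Hg0; rewrite /lambda_min.
have hR : forall s : {g : graph n | G_class a g}, - spec_rad (val s) \is Num.real.
  by move=> s; rewrite rpredN; exact: spec_rad_real (class_simple (valP s)) i0.
have [s Hs] := @fin_max _ (fun s : {g : graph n | G_class a g} => - spec_rad (val s))
   (exist _ g0 Hg0) hR.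
have := epsilon_spec (inhabits 0) (fun r => (exists2 g : graph n, G_class a g & spec_rad g = r) /\
              forall g : graph n, G_class a g -> r <= spec_rad g).
move=> H; case: H.
  exists (spec_rad (val s)); split; first by exists (val s) => //; exact: valP.
  by move=> g Hg; have := Hs (exist _ g Hg); rewrite lerN2.
by move=> [g Hg <-] Hmin; split; [exists g | ].
Qed.

Theorem theorem1p1 (alpha : nat) (halpha : (1 <= alpha)%N) :
  converges (fun n => lambda_min n alpha / n%:R) (alpha%:R)^-1.
Proof.
move=> eps eps0.
set K := Num.Def.archi_bound (2 / eps).
have HK := @archi_boundP _ (2 / eps) (ltW (divr_gt0 (ltr0Sn _ 1) eps0)).
exists (maxn alpha.*2 K.+1) => n; rewrite geq_max => /andP[hn hK].
have n0 : (0 < n)%N by apply: leq_trans hK.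
pose i0 : 'I_n := Ordinal n0.
have a0 : (0 < alpha)%N := halpha.
have [[g Hg <-] Hmin] := lambda_min_spec i0 (H_class a0 hn).
have a0R : 0 < alpha%:R :> algC by rewrite ltr0n.
have n0R : 0 < n%:R :> algC by rewrite ltr0n.
have lb := lower i0 a0 Hg.
have ub : spec_rad g <= n%:R / alpha%:R + 2.
  apply: le_trans (Hmin _ (H_class a0 hn)) _.
  apply: le_trans (spec_ub (@H_simple alpha n) i0 (H_deg a0 hn)) _.
  rewrite natrD lerD2r ler_pdivlMr // -natrM ler_nat.
  exact: leq_trunc_div.
have rg := spec_rad_real (class_simple Hg) i0.
have Hlt : 2 / n%:R < eps.
  rewrite ltr_pdivrMr // mulrC -ltr_pdivrMr //.
  apply: lt_le_trans HK _; rewrite ler_nat; exact: ltnW.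
apply: le_lt_trans Hlt.
rewrite real_ler_norml; last by rewrite rpredB ?rpredM ?rpredV ?realn.
have E : spec_rad g / n%:R - alpha%:R^-1 = (spec_rad g - n%:R / alpha%:R) / n%:R.
  by field; rewrite ?gt_eqF.
rewrite E.
have lb' : -2 <= spec_rad g - n%:R / alpha%:R.
  rewrite lerBrDr; apply: le_trans lb.
  by rewrite addrC lerD2l lerN2 ler1n.
have ub' : spec_rad g - n%:R / alpha%:R <= 2 by rewrite lerBlDr addrC.
have ni : 0 <= n%:R^-1 :> algC by rewrite invr_ge0 ltW.
apply/andP; split.
- by rewrite -mulNr; apply: ler_wpM2r.
- by apply: ler_wpM2r.
Qed.
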